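(* Let $\mathcal{C}=\mathsf{CSS}(A,B)$ with $A,B\subseteq\mathbb{F}_q^n$. If there exists a diagonal $n\times n$ matrix $D$ over $\mathbb{F}_q$ whose diagonal coefficients are not all equal such that $aD\in A$ and $bD\in B$ for all $a\in A$ and $b\in B$, then $\mathcal{C}$ is a splitting code.
   Context: For a CSS code $\mathsf{CSS}(A,B)$ given by subspaces $A,B\subseteq\mathbb{F}_q^n$ (vectors treated as row vectors), a subspace $A$ splits on a non-empty $h\subsetneq\{1,\dots,n\}$ if $A=A_1\oplus A_2$ where $A_1$ has support $h$ and $A_2$ is supported on the complement of $h$. The code splits on $h$ if both $A$ and $B$ split on $h$, and it is a splitting code if it splits on some such $h$. *)

(* Defs.v *)
From HB Require Import structures.
From mathcomp Require Import all_boot all_order all_algebra all_field.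
Set Implicit Arguments. Unset Strict Implicit. Unset Printing Implicit Defensive.
Import GRing.Theory.
Local Open Scope ring_scope.

Definition supported_on (F : fieldType) (n : nat) (U : {vspace 'rV[F]_n})
  (h : {set 'I_n}) : Prop :=
  forall v : 'rV[F]_n, v \in U -> forall i : 'I_n, i \notin h -> v 0 i = 0.

Definition splits_on (F : fieldType) (n : nat) (A : {vspace 'rV[F]_n})
  (h : {set 'I_n}) : Prop :=
  exists (A1 A2 : {vspace 'rV[F]_n}),
    [/\ (A1 + A2)%VS = A, (A1 :&: A2)%VS = 0%VS,
        supported_on A1 h & supported_on A2 (~: h)].

Definition css_splits_on (F : fieldType) (n : nat) (A B : {vspace 'rV[F]_n})
  (h : {set 'I_n}) : Prop :=
  [/\ h != set0, h != setT, splits_on A h & splits_on B h].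

Definition css_splitting (F : fieldType) (n : nat) (A B : {vspace 'rV[F]_n}) : Prop :=
  exists h : {set 'I_n}, css_splits_on A B h.

(* Main.v *)
Require Import Defs.
From HB Require Import structures.
From mathcomp Require Import all_boot all_order all_algebra all_field.
From mathcomp Require Import ring.
Local Open Scope ring_scope.
Import GRing.Theory.

Section Aux.
Variables (F : fieldType) (n : nat).

Definition Mh (h : {set 'I_n}) : 'M[F]_n :=
  diag_mx (\row_i ((i \notin h)%:R : F)).

Definition Sh (h : {set 'I_n}) : {vspace 'rV[F]_n} :=
  lker (linfun (mulmxr (Mh h))).

Lemma memSh h v : (v \in Sh h) <-> (forall i, i \notin h -> v 0 i = 0).
Proof.
rewrite /Sh memv_ker lfunE /= /Mh mul_mx_diag; split.
  move=> /eqP /matrixP H i Hi; have := H 0 i; rewrite !mxE Hi mulr1 => ->; done.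
move=> H; apply/eqP/matrixP => a b; rewrite !mxE (ord1 a).
by case: (boolP (b \in h)) => Hb /=; rewrite ?mulr0 // H // mulr1.
Qed.

Variables (D : 'M[F]_n) (lam : F).
Hypothesis Ddiag : is_diag_mx D.

Lemma mulD (v : 'rV[F]_n) m : (v *m D) 0 m = v 0 m * D m m.
Proof.
rewrite mxE (bigD1 m) //= big1 ?addr0 // => l Hl.
by move: Ddiag => /is_diag_mxP -> //; rewrite mulr0.
Qed.

Definition step (k : 'I_n) (v : 'rV[F]_n) :=
  (lam - D k k)^-1 *: (v *m D - D k k *: v).

Definition proj (s : seq 'I_n) (a : 'rV[F]_n) := foldr step a s.

Lemma proj_in (A : {vspace 'rV[F]_n}) s a :
  (forall a, a \in A -> a *m D \in A) -> a \in A -> proj s a \in A.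
Proof.
move=> HA Ha; elim: s => [|k s IH] //=.
by apply: memvZ; apply: memvB; [apply: HA | apply: memvZ].
Qed.

Lemma proj_coord s a m :
  proj s a 0 m = (\prod_(k <- s) ((lam - D k k)^-1 * (D m m - D k k))) * a 0 m.
Proof.
elim: s => [|k s IH] /=; first by rewrite big_nil mul1r.
rewrite big_cons -mulrA -IH /step -/(proj s a).
move: (proj s a) => w.
have EB : forall x y : 'rV[F]_n, (x - y) 0 m = x 0 m - y 0 m by move=> x y; rewrite !mxE.
have EZ : forall c (x : 'rV[F]_n), (c *: x) 0 m = c * x 0 m by move=> c x; rewrite !mxE.
rewrite EZ EB EZ mulD; ring.
Qed.

Definition sD := [seq k <- enum 'I_n | D k k != lam].
Definition hD := [set k | D k k == lam].

Lemma proj_val a m :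
  proj sD a 0 m = if D m m == lam then a 0 m else 0.
Proof.
rewrite proj_coord; case: eqP => Hm.
  rewrite big_seq big1 ?mul1r // => k; rewrite mem_filter => /andP [Hk _].
  by rewrite Hm mulVf // subr_eq0 eq_sym.
apply/eqP; rewrite mulf_eq0; apply/orP; left.
rewrite prodf_seq_eq0; apply/hasP; exists m.
  by rewrite mem_filter mem_enum andbT; apply/eqP.
by rewrite subrr mulr0 eqxx.
Qed.

Lemma split_inv (A : {vspace 'rV[F]_n}) :
  (forall a, a \in A -> a *m D \in A) -> splits_on A hD.
Proof.
move=> HA; exists (A :&: Sh hD)%VS, (A :&: Sh (~: hD))%VS; split.
- apply/vspaceP => v; apply/idP/idP.
    by apply/subvP: v; rewrite subv_add !capvSl.
  move=> Hv; rewrite -[v](subrK (proj sD v)) addrC.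
  apply: memv_add; rewrite memv_cap; apply/andP; split.
  + exact: proj_in.
  + apply/memSh => i; rewrite inE proj_val => /negbTE ->; done.
  + by apply: memvB => //; apply: proj_in.
  + apply/memSh => i; rewrite inE negbK inE !mxE proj_val => ->.
    by rewrite subrr.
- apply/eqP; rewrite -subv0; apply/subvP => v.
  rewrite !memv_cap memv0 => /and3P [/andP [_ /memSh H1] _ /memSh H2].
  apply/eqP/matrixP => a b; rewrite (ord1 a) mxE.
  case: (boolP (b \in hD)) => Hb; first by apply: H2; rewrite inE negbK.
  exact: H1.
- by move=> v /memv_capP [_ /memSh].
- by move=> v /memv_capP [_ /memSh].
Qed.

End Aux.

Theorem proposition14 (F : finFieldType) (n : nat) (A B : {vspace 'rV[F]_n})
  (D : 'M[F]_n) :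
  is_diag_mx D ->
  (exists i j : 'I_n, D i i != D j j) ->
  (forall a : 'rV[F]_n, a \in A -> a *m D \in A) ->
  (forall b : 'rV[F]_n, b \in B -> b *m D \in B) ->
  css_splitting A B.
Proof.
move=> Dd [i [j Hij]] HA HB; exists (@hD _ _ D (D i i)); split.
- by apply/set0Pn; exists i; rewrite inE.
- apply/negP => /eqP E; have : j \in @hD _ _ D (D i i) by rewrite E inE.
  by rewrite inE eq_sym (negbTE Hij).
- exact: split_inv.
- exact: split_inv.
Qed.
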